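(* Under the same setting as follows — $0<\gamma\le L$, $\alpha\in(0,2/L)$, $\mathcal{X}\subseteq\mathbb{R}^M$ nonempty closed convex, for each $t\ge0$ a nonempty closed convex $\mathcal{X}_t\subseteq\mathcal{X}$ and a differentiable $f_t:\mathbb{R}^M\to\mathbb{R}$ that is $L$-smooth and $\gamma$-strongly convex on $\mathcal{X}$, $\mathbf{x}_t^*:=\arg\min_{\mathbf{x}\in\mathcal{X}_t}f_t(\mathbf{x})$, $r_t:=\|\mathbf{x}_{t-1}^*-\mathbf{x}_t^*\|$, $\mathbf{x}_0\in\mathcal{X}_0$, arbitrary error vectors $\mathbf{e}_t\in\mathbb{R}^M$, and iterates $\mathbf{x}_t=\mathrm{proj}_{\mathcal{X}_t}\{\mathbf{x}_{t-1}-\alpha(\nabla f_t(\mathbf{x}_{t-1})+\mathbf{e}_t)\}$ for $t\ge1$ — define $\rho:=\max\{|1-\alpha\gamma|,|1-\alpha L|\}$, the path length $\omega_T:=\sum_{t=1}^T r_t$ and the cumulative gradient error $E_T:=\sum_{t=1}^T\|\mathbf{e}_t\|$. Then for every $T\ge1$, $$\sum_{t=1}^T\|\mathbf{x}_t-\mathbf{x}_t^*\|\le\frac{1}{1-\rho}\Big[\rho\|\mathbf{x}_0-\mathbf{x}_0^*\|+\rho\,\omega_T+\alpha E_T\Big].$$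
   Context: $\mathrm{proj}_{\mathcal{X}}\{\mathbf{y}\}:=\arg\min_{\mathbf{x}\in\mathcal{X}}\|\mathbf{x}-\mathbf{y}\|^2$ denotes Euclidean projection; $\|\cdot\|$ is the Euclidean norm. Note $\rho<1$ under the stated assumptions. *)

(* Defs.v *)
From HB Require Import structures.
From mathcomp Require Import all_boot all_order all_algebra.
From mathcomp Require Import all_classical all_reals all_analysis.
Set Implicit Arguments. Unset Strict Implicit. Unset Printing Implicit Defensive.
Import Order.TTheory GRing.Theory Num.Theory.
Import numFieldNormedType.Exports.
Local Open Scope classical_set_scope.
Local Open Scope ring_scope.

Section Defs.
Variables (R : realType) (M : nat).
Local Notation V := 'rV[R]_M.

Definition dotv (u v : V) : R := \sum_(i < M) u 0 i * v 0 i.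
Definition enorm (u : V) : R := Num.sqrt (\sum_(i < M) u 0 i ^+ 2).

Definition convexS (C : set V) : Prop :=
  forall a b, C a -> C b -> forall l : R, 0 <= l <= 1 ->
    C (l *: a + (1 - l) *: b).

Definition is_gradient (f : V -> R) (g : V -> V) : Prop :=
  forall x, differentiable f x /\ forall h, 'd f x h = dotv (g x) h.

Definition L_smooth_on (X : set V) (g : V -> V) (L : R) : Prop :=
  forall x y, X x -> X y -> enorm (g x - g y) <= L * enorm (x - y).

Definition strongly_convex_on (X : set V) (f : V -> R) (g : V -> V) (gam : R)
  : Prop :=
  forall x y, X x -> X y ->
    f x + dotv (g x) (y - x) + gam / 2 * enorm (y - x) ^+ 2 <= f y.

Definition is_argmin (C : set V) (f : V -> R) (xs : V) : Prop :=
  C xs /\ forall z, C z -> f xs <= f z.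

Definition is_proj (C : set V) (y p : V) : Prop :=
  C p /\ forall z, C z -> enorm (p - y) <= enorm (z - y).
End Defs.

(* Main.v *)
Require Import Defs.
From HB Require Import structures.
From mathcomp Require Import all_boot all_order all_algebra.
From mathcomp Require Import all_classical all_reals all_analysis.
From mathcomp Require Import ring lra.
Import Order.TTheory GRing.Theory Num.Theory.
Import numFieldNormedType.Exports.
Local Open Scope classical_set_scope.
Local Open Scope ring_scope.
Set Implicit Arguments. Unset Strict Implicit. Unset Printing Implicit Defensive.
Section Vec.
Variables (R : realType) (M : nat).
Local Notation V := 'rV[R]_M.
Implicit Types u v w : V.

Lemma dotvC u v : dotv u v = dotv v u.
Proof. by apply: eq_bigr => i _; rewrite mulrC. Qed.
Lemma dotvDl u v w : dotv (u + v) w = dotv u w + dotv v w.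
Proof. by rewrite /dotv -big_split; apply: eq_bigr => i _; rewrite !mxE mulrDl. Qed.
Lemma dotvZl (k : R) u v : dotv (k *: u) v = k * dotv u v.
Proof. by rewrite /dotv mulr_sumr; apply: eq_bigr => i _; rewrite !mxE mulrA. Qed.
Lemma dotvNl u v : dotv (- u) v = - dotv u v.
Proof. by rewrite /dotv -sumrN; apply: eq_bigr => i _; rewrite !mxE mulNr. Qed.
Lemma dotvBl u v w : dotv (u - v) w = dotv u w - dotv v w.
Proof. by rewrite dotvDl dotvNl. Qed.
Lemma dotvDr u v w : dotv w (u + v) = dotv w u + dotv w v.
Proof. by rewrite dotvC dotvDl !(dotvC w). Qed.
Lemma dotvZr (k : R) u v : dotv v (k *: u) = k * dotv v u.
Proof. by rewrite dotvC dotvZl dotvC. Qed.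
Lemma dotvNr u v : dotv v (- u) = - dotv v u.
Proof. by rewrite dotvC dotvNl dotvC. Qed.
Lemma dotvBr u v w : dotv w (u - v) = dotv w u - dotv w v.
Proof. by rewrite dotvDr dotvNr. Qed.
Lemma dotv0l v : dotv 0 v = 0.
Proof. by rewrite /dotv big1 // => i _; rewrite mxE mul0r. Qed.

Lemma dotv_ge0 u : 0 <= dotv u u.
Proof. by apply: sumr_ge0 => i _; rewrite -expr2 sqr_ge0. Qed.

Lemma enorm_sq u : enorm u ^+ 2 = dotv u u.
Proof.
rewrite /enorm sqr_sqrtr; last by apply: sumr_ge0 => i _; rewrite sqr_ge0.
by apply: eq_bigr => i _; rewrite expr2.
Qed.

Lemma enormE u : enorm u = Num.sqrt (dotv u u).
Proof. by rewrite /enorm; congr Num.sqrt; apply: eq_bigr => i _; rewrite expr2. Qed.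

Lemma enorm_ge0 u : 0 <= enorm u.
Proof. exact: sqrtr_ge0. Qed.

Lemma enormZ (k : R) u : enorm (k *: u) = `|k| * enorm u.
Proof.
rewrite !enormE dotvZl dotvZr mulrA sqrtrM; last by rewrite -expr2 sqr_ge0.
by rewrite -expr2 sqrtr_sqr.
Qed.

Lemma enormN u : enorm (- u) = enorm u.
Proof. by rewrite -scaleN1r enormZ normrN normr1 mul1r. Qed.

Lemma enormB u v : enorm (u - v) = enorm (v - u).
Proof. by rewrite -enormN opprB. Qed.

Lemma dotv_eq0 u v : enorm u = 0 -> dotv u v = 0.
Proof.
move=> h; have h2 : dotv u u = 0 by rewrite -enorm_sq h expr0n.
have hi : forall i, u 0 i = 0.
  move=> i; apply/eqP; rewrite -sqrf_eq0; apply/eqP.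
  move: h2; rewrite /dotv => /eqP; rewrite psumr_eq0; last first.
    by move=> j _; rewrite -expr2 sqr_ge0.
  by move=> /allP /(_ i (mem_index_enum _)) /implyP /(_ isT) /eqP; rewrite expr2.
by rewrite /dotv big1 // => i _; rewrite hi mul0r.
Qed.

Lemma CS u v : dotv u v <= enorm u * enorm v.
Proof.
have [a0|an0] := eqVneq (enorm u) 0; first by rewrite dotv_eq0 // a0 mul0r.
have [b0|bn0] := eqVneq (enorm v) 0.
  by rewrite dotvC dotv_eq0 // b0 mulr0.
have ha : 0 < enorm u by rewrite lt_def an0 enorm_ge0.
have hb : 0 < enorm v by rewrite lt_def bn0 enorm_ge0.
have := dotv_ge0 (enorm v *: u - enorm u *: v).
rewrite !(dotvBl, dotvBr, dotvZl, dotvZr) -!enorm_sq (dotvC v u).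
move=> h.
have hab : 0 < enorm u * enorm v by rewrite mulr_gt0.
rewrite -subr_ge0; rewrite -(pmulr_rge0 _ hab).
set a := enorm u in h hab *; set b := enorm v in h hab *.
set c := dotv u v in h *.
nra.
Qed.

Lemma CSabs u v : `|dotv u v| <= enorm u * enorm v.
Proof.
rewrite ler_norml CS andbT lerNl -dotvNl.
by apply: le_trans (CS _ _) _; rewrite enormN.
Qed.

Lemma enormD u v : enorm (u + v) <= enorm u + enorm v.
Proof.
rewrite -(ler_pXn2r (n:=2)) // ?nnegrE ?addr_ge0 ?enorm_ge0 //.
rewrite enorm_sq dotvDl !dotvDr -!enorm_sq (dotvC v u).
have := CS u v; nra.
Qed.

Lemma enormBtri u v w : enorm (u - w) <= enorm (u - v) + enorm (v - w).
Proof. by apply: le_trans (enormD _ _); rewrite addrA subrK. Qed.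

End Vec.
Section Deriv.
Variables (R : realType) (M : nat).
Local Notation V := 'rV[R]_M.

Lemma line_derive (f : V -> R) (u y : V) (t : R) :
  differentiable f (t *: u + y) ->
  is_derive t 1 (fun s => f (s *: u + y)) ('d f (t *: u + y) u).
Proof.
move=> df.
have e : (fun h : R => h^-1 *: ((fun s => f (s *: u + y)) (h *: 1 + t) - (fun s => f (s *: u + y)) t))
  = (fun h : R => h^-1 *: (f (h *: u + (t *: u + y)) - f (t *: u + y))).
  apply: funext => h /=; congr (_ *: (f _ - _)).
  by rewrite scaler1 scalerDl addrA.
have d1 : derivable f (t *: u + y) u by apply: diff_derivable.
apply: DeriveDef.
  by rewrite /derivable e.
by rewrite /derive e -/(derive f _ u) deriveE.
Qed.
End Deriv.
Section Descent.
Variables (R : realType) (M : nat).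
Local Notation V := 'rV[R]_M.

Lemma polyder (a b t : R) : is_derive t 1 (fun s : R => a * s + b * s ^+ 2) (a + b * (2 * t)).
Proof.
have h1 : is_derive t 1 (a \*: (@id R)) (a *: (1:R)) by apply: is_deriveZ.
have h2 : is_derive t 1 (b \*: ((@id R) ^+ 2)) (b *: ((2%:R * t ^+ 1) *: (1:R))).
  by apply: is_deriveZ; apply: is_deriveX.
have h := is_deriveD h1 h2.
have e : (a \*: (@id R) + b \*: ((@id R) ^+ 2)) = (fun s : R => a * s + b * s ^+ 2).
  by apply: funext => s /=; rewrite /GRing.scale_fun /=; congr (_ + _).
rewrite e in h. apply: (is_derive_eq h).
by rewrite -[a%:A]/(a * 1) -[(2 * t ^+ 1)%:A]/((2 * t ^+ 1) * 1) -[b *: _]/(b * _) !mulr1 expr1.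
Qed.

Lemma conv_seg (X : set V) (y z : V) (t : R) : convexS X -> X y -> X z -> 0 <= t <= 1 ->
  X (t *: (z - y) + y).
Proof.
move=> cX Xy Xz t01.
have -> : t *: (z - y) + y = t *: z + (1 - t) *: y.
  by apply/matrixP => i j; rewrite !mxE; ring.
exact: cX.
Qed.

Variables (f : V -> R) (g : V -> V) (X : set V) (L : R).
Hypotheses (cX : convexS X) (gf : is_gradient f g) (Ls : L_smooth_on X g L) (L0 : 0 <= L).

Lemma descent y z : X y -> X z ->
  f z <= f y + dotv (g y) (z - y) + L / 2 * enorm (z - y) ^+ 2.
Proof.
move=> Xy Xz; set u := z - y.
set a := dotv (g y) u; set b := L / 2 * dotv u u.
pose F := fun s : R => f (s *: u + y).
pose P := fun s : R => a * s + b * s ^+ 2.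
pose dphi := fun s : R => 'd f (s *: u + y) u - (a + b * (2 * s)).
have hd : forall s : R, is_derive s (1:R) (F - P) (dphi s).
  move=> s; apply: is_deriveB; last exact: polyder.
  by apply: line_derive; case: (gf (s *: u + y)).
have [c c01 hc] : exists2 c, c \in `]0, 1[%R & (F - P) 1 - (F - P) 0 = dphi c * (1 - 0).
  apply: MVT => //.
  apply: derivable_within_continuous => s _; exact: ex_derive.
have hc' : f (1 *: u + y) - (a * 1 + b * 1 ^+ 2) - (f (0 *: u + y) - (a * 0 + b * 0 ^+ 2))
  = ('d f (c *: u + y) u - (a + b * (2 * c))) * (1 - 0) := hc.
move: hc'; rewrite scale1r scale0r add0r subr0 mulr1 mulr0 expr1n expr0n /= mulr0 !addr0 mulr1 subr0.
have cpos : 0 < c by move: c01; rewrite in_itv /= => /andP [].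
have c1 : c < 1 by move: c01; rewrite in_itv /= => /andP [].
have Xc : X (c *: u + y) by apply: conv_seg => //; rewrite ltW // ltW.
have [_ ->] := gf (c *: u + y).
have hz : u + y = z by rewrite /u subrK.
rewrite hz => hc2.
have key : dotv (g (c *: u + y)) u - a <= L * c * dotv u u.
  rewrite /a -dotvBl.
  apply: le_trans (CS _ _) _.
  have := Ls Xc Xy; rewrite addrK enormZ gtr0_norm // => hl.
  apply: le_trans (ler_wpM2r (enorm_ge0 _) hl) _.
  by rewrite -enorm_sq mulrA expr2 mulrA.
rewrite enorm_sq -/u.
have : f z - a - b - f y <= 0.
  have hb : b * (2 * c) = L * c * dotv u u by rewrite /b; field.
  rewrite mulr1 hb in hc2.
  set P0 := L * c * dotv u u in key hc2 *.
  set Q := dotv (g (c *: u + y)) u in key hc2 *.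
  lra.
rewrite -/b; lra.
Qed.
End Descent.
Section VI.
Variables (R : realType) (M : nat).
Local Notation V := 'rV[R]_M.

Lemma small_lemma (A B : R) : 0 <= B ->
  (forall l : R, 0 < l -> l <= 1 -> 0 <= l * A + l ^+ 2 * B) -> 0 <= A.
Proof.
move=> B0 H; rewrite leNgt; apply/negP => An.
pose l := Num.min 1 (- A / (B + 1)).
have B1 : 0 < B + 1 by lra.
have lpos : 0 < l by rewrite /l lt_min ltr01 /= divr_gt0 // oppr_gt0.
have l1 : l <= 1 by rewrite /l ge_min lexx.
have l2 : l <= - A / (B + 1) by rewrite /l ge_min lexx orbT.
have := H l lpos l1.
have l3 : l * (B + 1) <= - A by rewrite -ler_pdivlMr.
have : l * B < - A by apply: lt_le_trans l3; rewrite ltr_pM2l //; lra.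
move=> h4 h5.
have : 0 <= l * (A + l * B) by rewrite mulrDr mulrA -expr2.
rewrite pmulr_rge0 //; lra.
Qed.

Lemma sqr_le (a b : R) : 0 <= a -> 0 <= b -> a <= b -> a ^+ 2 <= b ^+ 2.
Proof. move=> a0 b0 ab; rewrite ler_pXn2r // ?nnegrE //. Qed.

Lemma dotv_comb (a b : V) (l : R) :
  dotv (a + l *: b) (a + l *: b) = dotv a a + 2 * l * dotv a b + l ^+ 2 * dotv b b.
Proof. rewrite !(dotvDl, dotvDr, dotvZl, dotvZr) (dotvC b a); ring. Qed.

Lemma proj_vi (C : set V) (y p : V) : convexS C -> is_proj C y p ->
  forall z, C z -> 0 <= dotv (p - y) (z - p).
Proof.
move=> cC [Cp Hp] z Cz.
apply: (small_lemma (B := dotv (z - p) (z - p) / 2)).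
  by rewrite divr_ge0 // dotv_ge0.
move=> l l0 l1.
have Cq : C (l *: (z - p) + p) by apply: conv_seg => //; rewrite ltW.
have := sqr_le (enorm_ge0 _) (enorm_ge0 _) (Hp _ Cq).
rewrite !enorm_sq.
have -> : l *: (z - p) + p - y = (p - y) + l *: (z - p).
  by apply/matrixP => i j; rewrite !mxE; ring.
rewrite dotv_comb.
set A := dotv (p - y) (z - p); set D := dotv (z - p) (z - p).
move=> h.
have -> : l ^+ 2 * (D / 2) = (l * (l * D)) / 2 by rewrite expr2; field.
lra.
Qed.

Variables (f : V -> R) (g : V -> V) (X : set V) (L : R).
Hypotheses (cX : convexS X) (gf : is_gradient f g) (Ls : L_smooth_on X g L) (L0 : 0 <= L).

Lemma argmin_vi (C : set V) xs : convexS C -> C `<=` X -> is_argmin C f xs ->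
  forall z, C z -> 0 <= dotv (g xs) (z - xs).
Proof.
move=> cC CX [Cx Hx] z Cz.
apply: (small_lemma (B := L / 2 * dotv (z - xs) (z - xs))).
  by rewrite mulr_ge0 ?divr_ge0 ?dotv_ge0.
move=> l l0 l1.
have Cq : C (l *: (z - xs) + xs) by apply: conv_seg => //; rewrite ltW.
have h1 := Hx _ Cq.
have h2 := descent cX gf Ls (CX _ Cx) (CX _ Cq).
move: h2; rewrite addrK dotvZr enorm_sq dotvZl dotvZr.
set A := dotv (g xs) (z - xs); set D := dotv (z - xs) (z - xs).
have -> : L / 2 * (l * (l * D)) = l ^+ 2 * (L / 2 * D) by rewrite expr2; field.
lra.
Qed.

Lemma firm (p1 p2 u1 u2 : V) :
  0 <= dotv (p1 - u1) (p2 - p1) -> 0 <= dotv (p2 - u2) (p1 - p2) ->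
  dotv (p1 - p2) (p1 - p2) <= dotv (u1 - u2) (p1 - p2).
Proof.
have e1 : p2 - p1 = - (p1 - p2) by rewrite opprB.
have e2 : p2 - u2 = (p1 - u1) - (p1 - p2) + (u1 - u2).
  by apply/matrixP => i j; rewrite !mxE; ring.
rewrite e1 e2; move: (p1 - u1) (p1 - p2) (u1 - u2) => a w U.
rewrite dotvNr !dotvDl dotvNl; lra.
Qed.
End VI.
Section Cross.
Variables (R : realType) (M : nat).
Local Notation V := 'rV[R]_M.

Lemma enorm_eq0 (u : V) : enorm u = 0 -> u = 0.
Proof.
move=> h; apply/matrixP => i j; rewrite (ord1 i) mxE.
have := dotv_eq0 (delta_mx 0 j) h.
rewrite /dotv (bigD1 j) //= big1 ?addr0; last first.
  by move=> k kj; rewrite !mxE /= (negbTE kj) mulr0.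
by rewrite !mxE !eqxx mulr1.
Qed.

Lemma dotv0r (u : V) : dotv u 0 = 0.
Proof. by rewrite dotvC dotv0l. Qed.

Lemma dotv_lin (u d w : V) (a b : R) : dotv u (a *: d + b *: w) = a * dotv u d + b * dotv u w.
Proof. by rewrite dotvDr !dotvZr. Qed.

Lemma dotv_sq2 (d w : V) (a b : R) :
  dotv (a *: d + b *: w) (a *: d + b *: w) = a ^+ 2 * dotv d d + 2 * a * b * dotv d w + b ^+ 2 * dotv w w.
Proof. rewrite !(dotvDl, dotvDr, dotvZl, dotvZr) (dotvC w d); ring. Qed.

Variables (f : V -> R) (g : V -> V) (X : set V) (L gam : R).
Hypotheses (cX : convexS X) (gf : is_gradient f g) (Ls : L_smooth_on X g L) (L0 : 0 <= L)
  (SC : strongly_convex_on X f g gam).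

Lemma cross x y w : X x -> X y -> 0 < enorm w ->
  X ((1/2) *: (x + y) - (enorm (x - y) / (2 * enorm w)) *: w) ->
  X ((1/2) *: (x + y) + (enorm (x - y) / (2 * enorm w)) *: w) ->
  dotv w (((L + gam)/2) *: (x - y) - (g x - g y)) <= (L - gam)/2 * enorm (x - y) * enorm w.
Proof.
move=> Xx Xy wpos.
set s := enorm (x - y) / (2 * enorm w).
set P := (1/2) *: (x + y) - s *: w; set Q := (1/2) *: (x + y) + s *: w.
move=> XP XQ.
have [nd0|ndn0] := eqVneq (enorm (x - y)) 0.
  have exy : x = y by apply/eqP; rewrite -subr_eq0; apply/eqP; apply: enorm_eq0.
  by rewrite exy in nd0 *; rewrite nd0 !subrr scaler0 subr0 dotv0r mulr0 mul0r.
have ndpos : 0 < enorm (x - y) by rewrite lt_def ndn0 enorm_ge0.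
have h1 := SC Xx XP.
have h2 := descent cX gf Ls Xy XP.
have h3 := SC Xy XQ.
have h4 := descent cX gf Ls Xx XQ.
have e1 : P - x = (-(1/2)) *: (x - y) + (- s) *: w. by apply/matrixP => i j; rewrite /P /Q !mxE; field.
have e2 : P - y = (1/2) *: (x - y) + (- s) *: w by apply/matrixP => i j; rewrite /P /Q !mxE; field.
have e3 : Q - y = (1/2) *: (x - y) + s *: w by apply/matrixP => i j; rewrite /P /Q !mxE; field.
have e4 : Q - x = (-(1/2)) *: (x - y) + s *: w by apply/matrixP => i j; rewrite /P /Q !mxE; field.
rewrite (dotvBr (((L + gam)/2) *: (x - y))) dotvZr (dotvC w (x - y)) dotvBr (dotvC w (g x)) (dotvC w (g y)).
move: h1 h2 h3 h4; rewrite e1 e2 e3 e4 !enorm_sq !dotv_sq2 !dotv_lin.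
rewrite -!enorm_sq.
have es : s * (2 * enorm w) = enorm (x - y) by rewrite /s divfK // mulf_neq0 // gt_eqF.
move: (f x) (f y) (f P) (f Q) => fx fy fP fQ.
set D := enorm (x - y) in ndpos es *; set W := enorm w in wpos es *.
move: (dotv (g x) (x - y)) (dotv (g x) w) (dotv (g y) (x - y)) (dotv (g y) w) (dotv (x - y) w)
  => gxd gxw gyd gyw dw h1 h2 h3 h4.
have key : 2 * s * (((L + gam) / 2) * dw - (gxw - gyw)) <= (L - gam) * (D ^+ 2 / 4 + s ^+ 2 * W ^+ 2).
  nra.
have sW : s * W = D / 2 by rewrite -es; field.
set T := (L + gam) / 2 * dw - (gxw - gyw) in key *.
have k2 : D * T <= D * ((L - gam) / 2 * D * W).
  have := ler_wpM2r (ltW wpos) key.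
  have -> : 2 * s * T * W = D * T by rewrite -es; ring.
  have -> : (L - gam) * (D ^+ 2 / 4 + s ^+ 2 * W ^+ 2) * W = D * ((L - gam) / 2 * D * W).
    by rewrite -es; field.
  done.
by rewrite -(ler_pM2l ndpos).
Qed.
End Cross.
Section Contract.
Variables (R : realType) (M : nat).
Local Notation V := 'rV[R]_M.
Variables (f : V -> R) (g : V -> V) (X : set V) (L gam alpha : R).
Hypotheses (cX : convexS X) (gf : is_gradient f g) (Ls : L_smooth_on X g L)
  (SC : strongly_convex_on X f g gam) (g0 : 0 < gam) (gL : gam <= L) (a0 : 0 < alpha).

Let rho := Num.max `|1 - alpha * gam| `|1 - alpha * L|.
Let L0 : 0 <= L. Proof. exact: le_trans (ltW g0) gL. Qed.

Lemma rho_ge : `|1 - alpha * ((L + gam) / 2)| + alpha * ((L - gam) / 2) <= rho.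
Proof.
rewrite /rho; have [m0|m0] := lerP 0 (1 - alpha * ((L + gam) / 2)).
  rewrite (ger0_norm m0).
  have -> : 1 - alpha * ((L + gam) / 2) + alpha * ((L - gam) / 2) = 1 - alpha * gam by field.
  apply: le_trans (ler_norm (1 - alpha * gam)) _.
  by rewrite le_max lexx.
rewrite (ltr0_norm m0).
have -> : - (1 - alpha * ((L + gam) / 2)) + alpha * ((L - gam) / 2) = - (1 - alpha * L) by field.
have hn : - (1 - alpha * L) <= `|1 - alpha * L| by rewrite -normrN ler_norm.
apply: le_trans hn _.
by rewrite le_max lexx orbT.
Qed.

Lemma rho_ge0 : 0 <= rho.
Proof. by rewrite /rho le_max normr_ge0. Qed.

Lemma piece x y w : X x -> X y -> 0 < enorm w ->
  X ((1/2) *: (x + y) - (enorm (x - y) / (2 * enorm w)) *: w) ->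
  X ((1/2) *: (x + y) + (enorm (x - y) / (2 * enorm w)) *: w) ->
  dotv w ((x - y) - alpha *: (g x - g y)) <= rho * enorm (x - y) * enorm w.
Proof.
move=> Xx Xy wp XP XQ.
have hc := cross cX gf Ls SC Xx Xy wp XP XQ.
set c := (L + gam) / 2.
have -> : (x - y) - alpha *: (g x - g y) = (1 - alpha * c) *: (x - y) + alpha *: (c *: (x - y) - (g x - g y)).
  by apply/matrixP => i j; rewrite !mxE; ring.
rewrite dotv_lin.
have h1 : (1 - alpha * c) * dotv w (x - y) <= `|1 - alpha * c| * (enorm (x - y) * enorm w).
  apply: le_trans (ler_norm _) _; rewrite normrM; apply: ler_wpM2l => //.
  by rewrite dotvC; apply: CSabs.
have h2 : alpha * dotv w (c *: (x - y) - (g x - g y)) <= alpha * ((L - gam) / 2 * enorm (x - y) * enorm w).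
  by apply: ler_wpM2l => //; apply: ltW.
have h3 := rho_ge.
have hp : 0 <= enorm (x - y) * enorm w by rewrite mulr_ge0 ?enorm_ge0.
rewrite -/c in h3.
have h4 := ler_wpM2r hp h3.
have e1 : alpha * ((L - gam) / 2 * enorm (x - y) * enorm w) = alpha * ((L - gam) / 2) * (enorm (x - y) * enorm w) by ring.
have e2 : rho * enorm (x - y) * enorm w = rho * (enorm (x - y) * enorm w) by ring.
rewrite e1 in h2; rewrite e2; rewrite mulrDl in h4.
lra.
Qed.

Lemma final_ar (Ga Gb Fa Fb A B C P Q S e : R) : Fa - Fb <= P -> Ga - Fa <= A -> Fb - Gb <= B ->
  A + B = C -> P = Q - S -> 0 <= S -> C <= e -> Ga - Gb <= Q + e.
Proof. move=> *; lra. Qed.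

Lemma Gdiff (w x y : V) : dotv w (x - alpha *: g x) - dotv w (y - alpha *: g y)
  = dotv w ((x - y) - alpha *: (g x - g y)).
Proof. rewrite -dotvBr; congr dotv; apply/matrixP => i j; rewrite !mxE; ring. Qed.

Lemma Gclose (w u v : V) : X u -> X v ->
  dotv w ((u - v) - alpha *: (g u - g v)) <= enorm w * ((1 + alpha * L) * enorm (u - v)).
Proof.
move=> Xu Xv; apply: le_trans (CS _ _) _; apply: ler_wpM2l; first exact: enorm_ge0.
apply: le_trans (enormD _ _) _; rewrite enormN enormZ gtr0_norm //.
have := Ls Xu Xv => h.
have : alpha * enorm (g u - g v) <= alpha * (L * enorm (u - v)) by apply: ler_wpM2l => //; apply: ltW.
lra.
Qed.

Lemma mixX (p q z : V) (eps tau : R) : X p -> X q -> X z -> 0 < eps -> eps < 1 ->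
  `|tau| <= eps / 2 ->
  X ((1 - eps) *: z + eps *: ((1/2) *: (p + q)) + tau *: (p - q)).
Proof.
move=> Xp Xq Xz e0 e1 ht.
have [ht1 ht2] : - (eps / 2) <= tau /\ tau <= eps / 2.
  by move: ht; rewrite ler_norml => /andP [].
set be := (eps / 2 + tau) / eps.
have be0 : 0 <= be by rewrite /be divr_ge0 //; [lra | apply: ltW].
have be1 : be <= 1 by rewrite /be ler_pdivrMr //; lra.
have Xr : X (be *: p + (1 - be) *: q) by apply: cX => //; rewrite be0 be1.
have -> : (1 - eps) *: z + eps *: ((1/2) *: (p + q)) + tau *: (p - q)
   = eps *: (be *: p + (1 - be) *: q) + (1 - eps) *: z.
  apply/matrixP => i j; rewrite !mxE /be; field; exact: lt0r_neq0.
apply: cX => //; rewrite ltW //=; lra.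
Qed.

Lemma contract a b p q : X a -> X b -> X p -> X q ->
  dotv (p - q) ((a - b) - alpha *: (g a - g b)) <= rho * enorm (a - b) * enorm (p - q).
Proof.
move=> Xa Xb Xp Xq.
have [w0|wn0] := eqVneq (enorm (p - q)) 0.
  by rewrite dotv_eq0 // w0 mulr0.
have wp : 0 < enorm (p - q) by rewrite lt_def wn0 enorm_ge0.
move: wn0 wp; move Ew : (p - q) => w; move EW : (enorm w) => W wn0 wp.
have Xm0 : X ((1/2) *: (p + q)).
  have -> : (1/2) *: (p + q) = (1/2) *: p + (1 - 1/2) *: q.
    by apply/matrixP => i j; rewrite !mxE; field.
  by apply: cX => //; apply/andP; split; lra.
move: Xm0; move Em : ((1/2) *: (p + q)) => m0 Xm0.
set K := W * (1 + alpha * L) * (enorm (a - m0) + enorm (b - m0)).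
have K0 : 0 <= K.
  rewrite /K !mulr_ge0 ?addr_ge0 ?enorm_ge0 ?ltW //.
  by rewrite mulr_gt0 //; exact: lt_le_trans g0 gL.
apply/ler_addgt0Pr => e e0.
set eps := Num.min (1/2) (e / (K + 1)).
have K1 : 0 < K + 1 by lra.
have eps0 : 0 < eps by rewrite /eps lt_min; apply/andP; split; [lra | apply: divr_gt0].
have eps1 : eps <= 1/2 by rewrite /eps ge_min lexx.
have eps2 : eps <= e / (K + 1) by rewrite /eps ge_min lexx orbT.
have epsK : eps * K <= e.
  have : eps * (K + 1) <= e by rewrite -ler_pdivlMr.
  lra.
have epsW : 0 < eps * W by rewrite mulr_gt0.
set n := (Num.Def.trunc (enorm (a - b) / (eps * W))).+1.
have hn : enorm (a - b) / (eps * W) < n%:R by apply: truncnS_gt.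
have n0 : 0 < n%:R :> R by rewrite ltr0n.
have nn0 : n%:R != 0 :> R by apply: lt0r_neq0.
pose mix (z : V) (tau : R) := (1 - eps) *: z + eps *: m0 + tau *: w.
pose zz (l : R) := l *: (a - b) + b.
pose s (i : nat) := mix (zz (i%:R / n%:R)) 0.
have Xzz : forall l, 0 <= l <= 1 -> X (zz l) by move=> l hl; apply: conv_seg.
have Xmix : forall z tau, X z -> `|tau| <= eps / 2 -> X (mix z tau).
  move=> z tau Xz ht; rewrite /mix -Ew -Em; apply: mixX => //; lra.
have Xs : forall i, (i <= n)%N -> X (s i).
  move=> i hi; apply: Xmix; last by rewrite normr0; lra.
  apply: Xzz; rewrite divr_ge0 ?ler0n ?ler_pdivrMr // mul1r ler_nat hi //.
have eps1' : eps < 1 by lra.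
have ds : forall i, s i.+1 - s i = ((1 - eps) / n%:R) *: (a - b).
  move=> i; apply/matrixP => k j; rewrite /s /mix /zz !mxE -natr1; field; exact: nn0.
have nds : forall i, enorm (s i.+1 - s i) = ((1 - eps) / n%:R) * enorm (a - b).
  move=> i; rewrite ds enormZ ger0_norm // divr_ge0 // ?ler0n //; lra.
have sig : forall i, enorm (s i.+1 - s i) / (2 * W) <= eps / 2.
  move=> i; rewrite nds ler_pdivrMr ?mulr_gt0 //.
  have h1 : enorm (a - b) < n%:R * (eps * W) by rewrite -ltr_pdivrMr.
  have h2 : (1 - eps) / n%:R * enorm (a - b) <= enorm (a - b) / n%:R.
    rewrite mulrC mulrA ler_pdivrMr // divfK //.
    have := enorm_ge0 (a - b); nra.
  apply: le_trans h2 _.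
  rewrite ler_pdivrMr //.
  have -> : eps / 2 * (2 * W) * n%:R = n%:R * (eps * W) by field.
  exact: ltW.
have mid : forall i tau, (1/2) *: (s i.+1 + s i) + tau *: w
    = mix (zz ((2 * i%:R + 1) / (2 * n%:R))) tau.
  move=> i tau; apply/matrixP => k j; rewrite /s /mix /zz !mxE -natr1; field; exact: nn0.
pose F := fun i => dotv w (s i - alpha *: g (s i)).
have pc : forall i, (i < n)%N -> F i.+1 - F i <= rho * (((1 - eps) / n%:R) * enorm (a - b)) * W.
  move=> i hi; rewrite /F Gdiff -(nds i) -EW.
  have hi' : i%:R + 1 <= n%:R :> R by rewrite natr1 ler_nat.
  have Xz : X (zz ((2 * i%:R + 1) / (2 * n%:R))).
    apply: Xzz; apply/andP; split.
      by apply: divr_ge0; [rewrite addr_ge0 ?mulr_ge0 ?ler0n // | rewrite mulr_ge0 ?ler0n].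
    by rewrite ler_pdivrMr ?mulr_gt0 //; lra.
  have sg0 : 0 <= enorm (s i.+1 - s i) / (2 * enorm w).
    by rewrite divr_ge0 ?enorm_ge0 // mulr_ge0 ?enorm_ge0.
  apply: piece => //.
  - by apply: Xs.
  - by apply: Xs; apply: ltnW.
  - by rewrite EW.
  - rewrite -scaleNr mid; apply: Xmix => //; rewrite normrN ger0_norm // EW; exact: sig.
  - rewrite mid; apply: Xmix => //; rewrite ger0_norm // EW; exact: sig.
have tel : \sum_(0 <= i < n) (F i.+1 - F i) = F n - F 0%N := telescope_sumr F (leq0n n).
have sumb : \sum_(0 <= i < n) (F i.+1 - F i) <= \sum_(0 <= i < n) (rho * (((1 - eps) / n%:R) * enorm (a - b)) * W).
  by apply: ler_sum_nat => i /andP [_ hi]; apply: pc.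
rewrite tel sumr_const_nat subn0 -[X in _ <= X]mulr_natr in sumb.
have en : rho * ((1 - eps) / n%:R * enorm (a - b)) * W * n%:R = rho * (1 - eps) * enorm (a - b) * W.
  by field.
rewrite en in sumb.
pose a' := (1 - eps) *: a + eps *: m0.
pose b' := (1 - eps) *: b + eps *: m0.
have Fn : F n = dotv w (a' - alpha *: g a').
  by rewrite /F /s divff // /zz scale1r subrK /mix scale0r addr0.
have F0 : F 0%N = dotv w (b' - alpha *: g b').
  by rewrite /F /s mul0r /zz scale0r add0r /mix scale0r addr0.
have Xa' : X a'.
  have := Xmix a 0 Xa; rewrite normr0 /mix scale0r addr0; apply; apply: divr_ge0 => //; exact: ltW.
have Xb' : X b'.
  have := Xmix b 0 Xb; rewrite normr0 /mix scale0r addr0; apply; apply: divr_ge0 => //; exact: ltW.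
have ha : dotv w (a - alpha *: g a) - dotv w (a' - alpha *: g a')
    <= W * ((1 + alpha * L) * (eps * enorm (a - m0))).
  rewrite Gdiff; apply: le_trans (Gclose w Xa Xa') _; rewrite EW.
  have -> : a - a' = eps *: (a - m0) by apply/matrixP => i j; rewrite !mxE; ring.
  by rewrite enormZ ger0_norm // ltW.
have hb : dotv w (b' - alpha *: g b') - dotv w (b - alpha *: g b)
    <= W * ((1 + alpha * L) * (eps * enorm (b - m0))).
  rewrite Gdiff; apply: le_trans (Gclose w Xb' Xb) _; rewrite EW.
  have -> : b' - b = eps *: (m0 - b) by apply/matrixP => i j; rewrite !mxE; ring.
  by rewrite enormZ ger0_norm ?(ltW eps0) // enormB.
rewrite -Gdiff.
rewrite Fn F0 in sumb.
have hD : 0 <= rho * enorm (a - b) * W by rewrite !mulr_ge0 ?rho_ge0 ?enorm_ge0 ?ltW.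
have hK : W * ((1 + alpha * L) * (eps * enorm (a - m0))) + W * ((1 + alpha * L) * (eps * enorm (b - m0))) = eps * K.
  by rewrite /K; ring.
have h4 : rho * (1 - eps) * enorm (a - b) * W = rho * enorm (a - b) * W - eps * (rho * enorm (a - b) * W) by ring.
have h5 : 0 <= eps * (rho * enorm (a - b) * W) by rewrite mulr_ge0 // ltW.
exact: (final_ar sumb ha hb hK h4 h5 epsK).
Qed.

End Contract.
Lemma step_bound (R : realType) (M : nat) (gam L alpha : R)
  (X : set 'rV[R]_M) (C : set 'rV[R]_M) (f : 'rV[R]_M -> R) (g : 'rV[R]_M -> 'rV[R]_M)
  (xprev xs xnew ee : 'rV[R]_M) :
  0 < gam -> gam <= L -> 0 < alpha -> convexS X -> convexS C -> C `<=` X ->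
  is_gradient f g -> L_smooth_on X g L -> strongly_convex_on X f g gam ->
  is_argmin C f xs -> X xprev ->
  is_proj C (xprev - alpha *: (g xprev + ee)) xnew ->
  enorm (xnew - xs) <= Num.max `|1 - alpha * gam| `|1 - alpha * L| * enorm (xprev - xs) + alpha * enorm ee.
Proof.
move=> g0 gL a0 cX cC CX gf Ls SC am Xp pr.
have L0 : 0 <= L by apply: le_trans (ltW g0) gL.
have vi1 := proj_vi cC pr.
have vi2 := argmin_vi cX gf Ls L0 cC CX am.
have Cn : C xnew by case: pr.
have Cs : C xs by case: am.
set u1 := xprev - alpha *: (g xprev + ee).
set u2 := xs - alpha *: g xs.
have h1 : 0 <= dotv (xnew - u1) (xs - xnew) by apply: vi1.
have h2 : 0 <= dotv (xs - u2) (xnew - xs).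
  have -> : xs - u2 = alpha *: g xs by rewrite /u2 opprB addrC subrK.
  by rewrite dotvZl mulr_ge0 ?(ltW a0) // vi2.
have hf := firm h1 h2.
have eu : u1 - u2 = ((xprev - xs) - alpha *: (g xprev - g xs)) - alpha *: ee.
  by apply/matrixP => i j; rewrite /u1 /u2 !mxE; ring.
rewrite eu -enorm_sq (dotvC (_ - alpha *: ee)) dotvBr dotvZr in hf.
have hc := contract cX gf Ls SC g0 gL a0 Xp (CX _ Cs) (CX _ Cn) (CX _ Cs).
have he : - (alpha * dotv (xnew - xs) ee) <= alpha * (enorm (xnew - xs) * enorm ee).
  rewrite -mulrN; apply: ler_wpM2l; first exact: ltW.
  by rewrite -dotvNr; apply: le_trans (CS _ _) _; rewrite enormN.

set rho := Num.max `|1 - alpha * gam| `|1 - alpha * L| in hc *.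
set W := enorm (xnew - xs) in hf hc he *.
set B := rho * enorm (xprev - xs) + alpha * enorm ee.
have : W * W <= B * W.
  rewrite -expr2 /B mulrDl; move: hf hc he; rewrite -/W.
  move: (dotv (xnew - xs) (xprev - xs - alpha *: (g xprev - g xs))) (dotv (xnew - xs) ee) => P Q.
  move=> h1' h2' h3'.
  have -> : alpha * enorm ee * W = alpha * (W * enorm ee) by ring.
  lra.
have W0 : 0 <= W by apply: enorm_ge0.
have [Wz|Wp] := eqVneq W 0.
  move=> _; rewrite Wz /B; apply: addr_ge0.
    by apply: mulr_ge0; [rewrite /rho le_max normr_ge0 | apply: enorm_ge0].
  by apply: mulr_ge0; [apply: ltW | apply: enorm_ge0].
have Wpos : 0 < W by rewrite lt_def Wp W0.
by rewrite ler_pM2r.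
Qed.
Lemma fin_ar (R : realType) (S D0 DT Sm om E rho alpha : R) :
  0 <= rho -> rho < 1 -> 0 <= DT -> S <= rho * Sm + rho * om + alpha * E -> Sm = D0 + S - DT ->
  (1 - rho) * S <= rho * D0 + rho * om + alpha * E.
Proof.
move=> r0 r1 dt h e; rewrite e in h.
have : rho * DT >= 0 by rewrite mulr_ge0.
move: h; rewrite !mulrDr !mulrN mulrBl mul1r; lra.
Qed.

Unset Implicit Arguments. Set Strict Implicit.

Theorem corollary1 (R : realType) (M : nat) (gam L alpha : R)
  (X : set 'rV[R]_M) (Xt : nat -> set 'rV[R]_M)
  (f : nat -> 'rV[R]_M -> R) (g : nat -> 'rV[R]_M -> 'rV[R]_M)
  (xstar x e : nat -> 'rV[R]_M) :
  0 < gam -> gam <= L -> 0 < alpha -> alpha < 2 / L ->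
  X !=set0 -> closed X -> convexS X ->
  (forall t, Xt t !=set0 /\ closed (Xt t) /\ convexS (Xt t) /\ Xt t `<=` X) ->
  (forall t, is_gradient (f t) (g t)) ->
  (forall t, L_smooth_on X (g t) L) ->
  (forall t, strongly_convex_on X (f t) (g t) gam) ->
  (forall t, is_argmin (Xt t) (f t) (xstar t)) ->
  Xt 0%N (x 0%N) ->
  (forall t, is_proj (Xt t.+1) (x t - alpha *: (g t.+1 (x t) + e t.+1)) (x t.+1)) ->
  let rho := Num.max `|1 - alpha * gam| `|1 - alpha * L| in
  forall T : nat, (1 <= T)%N ->
  let omega := \sum_(1 <= t < T.+1) enorm (xstar t.-1 - xstar t) in
  let E := \sum_(1 <= t < T.+1) enorm (e t) in
  \sum_(1 <= t < T.+1) enorm (x t - xstar t)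
    <= (1 - rho)^-1 * (rho * enorm (x 0%N - xstar 0%N) + rho * omega + alpha * E).
Proof.
move=> g0 gL a0 a2 Xne cl cX hXt gf Ls SCt am x0 pr rho T T1.
cbv zeta.
set omega := \sum_(1 <= t < T.+1) enorm (xstar t.-1 - xstar t).
set E := \sum_(1 <= t < T.+1) enorm (e t).
have Lp : 0 < L by apply: lt_le_trans g0 gL.
have Xx : forall t, Xt t (x t) by case=> [|t] //; case: (pr t).
have rho0 : 0 <= rho by rewrite /rho le_max normr_ge0.
have hstep : forall t, enorm (x t.+1 - xstar t.+1) <=
    rho * enorm (x t - xstar t) + rho * enorm (xstar t - xstar t.+1) + alpha * enorm (e t.+1).
  move=> t.
  have [_ [_ [cC CX]]] := hXt t.+1.
  have [_ [_ [_ CXt]]] := hXt t.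
  have h := step_bound g0 gL a0 cX cC CX (gf t.+1) (Ls t.+1) (SCt t.+1) (am t.+1) (CXt _ (Xx t)) (pr t).
  have tri := enormBtri (x t) (xstar t) (xstar t.+1).
  have h2 := ler_wpM2l rho0 tri.
  rewrite -/rho in h.
  apply: le_trans h _.
  rewrite mulrDr in h2.
  move: h2; move: (rho * enorm (x t - xstar t.+1)) (rho * enorm (x t - xstar t)) (rho * enorm (xstar t - xstar t.+1)) => A B C' h2.
  lra.
have rho1 : rho < 1.
  have aL : alpha * L < 2 by rewrite -ltr_pdivlMr.
  have ag : alpha * gam <= alpha * L by rewrite ler_wpM2l // ltW.
  have ag0 : 0 < alpha * gam by rewrite mulr_gt0.
  rewrite /rho gt_max !ltr_norml.
  apply/andP; split; apply/andP; split; lra.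
set D := fun t => enorm (x t - xstar t).
have hs : \sum_(1 <= t < T.+1) D t <= rho * \sum_(1 <= t < T.+1) D t.-1 + rho * omega + alpha * E.
  rewrite /omega /E !mulr_sumr -!big_split /=; apply: ler_sum_nat => t /andP [t1 _].
  by case: t t1 => // t _; apply: hstep.
have hs2 : \sum_(1 <= t < T.+1) D t.-1 = D 0%N + \sum_(1 <= t < T.+1) D t - D T.
  rewrite big_add1 /=.
  have e1 := big_nat_recr T 0 (fun t => D t) (leq0n T) (op := +%R) (idx := 0).
  have e2 := big_nat_recl T 0 (fun t => D t) (leq0n T) (op := +%R) (idx := 0).
  rewrite big_add1 /= in e2 *.
  have e3 : \sum_(0 <= i < T) D i = \sum_(0 <= i < T.+1) D i - D T by rewrite e1 addrK.
  rewrite e3 e2; done.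
have DT0 : 0 <= D T by apply: enorm_ge0.
have fa := fin_ar rho0 rho1 DT0 hs hs2.
rewrite ler_pdivlMl; last by rewrite subr_gt0.
exact: fa.
Qed.
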